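(* Assume $\nabla f$ is $L$-Lipschitz, and consider the SAM flow at a point $(\mathcal G_1,\ldots,\mathcal G_K)$ where not all $g_k$ vanish. Then for all $i,j\in[K]$ with $i\ne j$, $$\frac{d}{dt}\big(\|\mathcal G_i\|_F^2-\|\mathcal G_j\|_F^2\big)=2\rho u\big(\|g_i\|_F^2-\|g_j\|_F^2\big)+R_{ij},$$ where there is a constant $C$ depending only on $\Phi$, $K$, $L$, the Frobenius norms of the current cores and $\|\nabla f(\mathcal T)\|_F$ (with $\mathcal T=\Phi(\mathcal G_1,\ldots,\mathcal G_K)$) such that $|R_{ij}|\le C\rho^2$ for all $\rho\in(0,1]$. (The paper writes the remainder as $O(\rho^2L)$.)
   Context: Let $K\ge 2$. For each $k\in[K]$ let $V_k$ be a finite-dimensional real space of tensors with Frobenius inner product $\langle\cdot,\cdot\rangle_F$ and norm $\|\cdot\|_F$; $[K]=\{1,\ldots,K\}$. Let $\Phi:V_1\times\cdots\times V_K\to\mathbb R^{n_1\times\cdots\times n_d}$ be multilinear, $f:\mathbb R^{n_1\times\cdots\times n_d}\to\mathbb R$ continuously differentiable with $\|\nabla f(\mathcal X)-\nabla f(\mathcal Y)\|_F\le L\|\mathcal X-\mathcal Y\|_F$ for all $\mathcal X,\mathcal Y$, and $F:=f\circ\Phi$. SAM gradient flow with radius $\rho>0$: at a point $(\mathcal G_1,\ldots,\mathcal G_K)$ let $g_k=\nabla_{\mathcal G_k}F(\mathcal G_1,\ldots,\mathcal G_K)$, $u=(\sum_{j=1}^K\|g_j\|_F^2)^{-1/2}$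 (requiring not all $g_j=0$), $\tilde{\mathcal G}_k=\mathcal G_k+\rho u g_k$, $\tilde g_k=\nabla_{\mathcal G_k}F(\tilde{\mathcal G}_1,\ldots,\tilde{\mathcal G}_K)$; the SAM flow is $\frac{d}{dt}\mathcal G_k=-\tilde g_k$ for all $k\in[K]$, and time derivatives above are along this flow at the given point. *)

(* Defs.v *)
From HB Require Import structures.
From mathcomp Require Import all_boot all_order all_algebra.
From mathcomp Require Import all_classical all_reals all_analysis.
Set Implicit Arguments. Unset Strict Implicit. Unset Printing Implicit Defensive.
Import Order.TTheory GRing.Theory Num.Theory.
Local Open Scope ring_scope.

Section Defs.
Variable R : realType.

(* Tensors are represented by their (flattened) coordinate row vectors;
   the Frobenius inner product is the Euclidean dot product of coordinates. *)
Definition frob_dot (n : nat) (x y : 'rV[R]_n) : R := \sum_(c < n) x 0 c * y 0 c.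
Definition frob2 (n : nat) (x : 'rV[R]_n) : R := frob_dot x x.
Definition frob (n : nat) (x : 'rV[R]_n) : R := Num.sqrt (frob2 x).

Variables (K : nat) (m : 'I_K -> nat).
Definition cores := forall k : 'I_K, 'rV[R]_(m k).

Definition multilinear (N : nat) (Phi : cores -> 'rV[R]_N) : Prop :=
  forall (G : cores) (k : 'I_K) (a : R) (x y : 'rV[R]_(m k)),
    Phi (@dfwith _ _ G k (a *: x + y)) = a *: Phi (@dfwith _ _ G k x) + Phi (@dfwith _ _ G k y).

Definition is_gradient (N : nat) (f : 'rV[R]_N -> R) (gf : 'rV[R]_N -> 'rV[R]_N) :=
  forall X H : 'rV[R]_N,
    is_derive (0 : R) (1 : R) (fun t : R => f (X + t *: H)) (frob_dot (gf X) H).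

Definition is_partial_gradient (F : cores -> R)
    (gF : forall k : 'I_K, cores -> 'rV[R]_(m k)) :=
  forall (G : cores) (k : 'I_K) (w : 'rV[R]_(m k)),
    is_derive (0 : R) (1 : R) (fun t : R => F (@dfwith _ _ G k (G k + t *: w)))
      (frob_dot (gF k G) w).

Definition sam_u (gF : forall k : 'I_K, cores -> 'rV[R]_(m k)) (G : cores) : R :=
  (Num.sqrt (\sum_(j < K) frob2 (gF j G)))^-1.

Definition sam_perturb (gF : forall k : 'I_K, cores -> 'rV[R]_(m k))
    (rho : R) (G : cores) : cores :=
  fun k => G k + (rho * sam_u gF G) *: gF k G.

Definition sam_field (gF : forall k : 'I_K, cores -> 'rV[R]_(m k))
    (rho : R) (G : cores) : cores :=
  fun k => - gF k (sam_perturb gF rho G).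

Definition follows_at (gamma : R -> cores) (t0 : R) (V : cores) (G : cores) : Prop :=
  gamma t0 = G /\
  forall (k : 'I_K) (c : 'I_(m k)),
    is_derive t0 (1 : R) (fun t : R => gamma t k 0 c) (V k 0 c).

End Defs.

(* Main.v *)
Require Import Defs.
From HB Require Import structures.
From mathcomp Require Import all_boot all_order all_algebra.
From mathcomp Require Import all_classical all_reals all_analysis.
From mathcomp Require Import ring lra.
Set Implicit Arguments. Unset Strict Implicit. Unset Printing Implicit Defensive.
Import Order.TTheory GRing.Theory Num.Theory.
Local Open Scope ring_scope.
Section Frob.
Variable R : realType.
Implicit Types (n : nat).

Lemma dotC n (x y : 'rV[R]_n) : frob_dot x y = frob_dot y x.
Proof. by apply: eq_bigr => c _; rewrite mulrC. Qed.

Lemma dotDr n (x y z : 'rV[R]_n) : frob_dot x (y + z) = frob_dot x y + frob_dot x z.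
Proof. by rewrite /frob_dot -big_split; apply: eq_bigr => c _; rewrite !mxE mulrDr. Qed.

Lemma dotDl n (x y z : 'rV[R]_n) : frob_dot (y + z) x = frob_dot y x + frob_dot z x.
Proof. by rewrite dotC dotDr !(dotC x). Qed.

Lemma dotZr n a (x y : 'rV[R]_n) : frob_dot x (a *: y) = a * frob_dot x y.
Proof. by rewrite /frob_dot mulr_sumr; apply: eq_bigr => c _; rewrite !mxE; ring. Qed.

Lemma dotZl n a (x y : 'rV[R]_n) : frob_dot (a *: x) y = a * frob_dot x y.
Proof. by rewrite dotC dotZr dotC. Qed.

Lemma dotNr n (x y : 'rV[R]_n) : frob_dot x (- y) = - frob_dot x y.
Proof. by rewrite -scaleN1r dotZr mulN1r. Qed.

Lemma dotNl n (x y : 'rV[R]_n) : frob_dot (- x) y = - frob_dot x y.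
Proof. by rewrite dotC dotNr dotC. Qed.

Lemma dotBr n (x y z : 'rV[R]_n) : frob_dot x (y - z) = frob_dot x y - frob_dot x z.
Proof. by rewrite dotDr dotNr. Qed.

Lemma dotBl n (x y z : 'rV[R]_n) : frob_dot (y - z) x = frob_dot y x - frob_dot z x.
Proof. by rewrite dotDl dotNl. Qed.

Lemma dot0r n (x : 'rV[R]_n) : frob_dot x 0 = 0.
Proof. by rewrite /frob_dot big1 // => c _; rewrite mxE mulr0. Qed.

Lemma frob2_ge0 n (x : 'rV[R]_n) : 0 <= frob2 x.
Proof. by apply: sumr_ge0 => c _; rewrite -expr2 sqr_ge0. Qed.

Lemma frob_ge0 n (x : 'rV[R]_n) : 0 <= frob x.
Proof. exact: sqrtr_ge0. Qed.

Lemma frob_sq n (x : 'rV[R]_n) : frob x ^+ 2 = frob2 x.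
Proof. by rewrite sqr_sqrtr // frob2_ge0. Qed.

Lemma le_sq_le (a b : R) : 0 <= b -> a ^+ 2 <= b ^+ 2 -> a <= b.
Proof. move=> hb h; nra. Qed.

Lemma frob2_0 n (x : 'rV[R]_n) : frob2 x = 0 -> forall c, x 0 c = 0.
Proof.
move=> h c; have := h; rewrite /frob2 /frob_dot => /eqP.
rewrite psumr_eq0; last by move=> i _; rewrite -expr2 sqr_ge0.
by move=> /allP /(_ c (mem_index_enum _)) /=; rewrite mulf_eq0 orbb => /eqP.
Qed.

Lemma CS2 n (x y : 'rV[R]_n) : frob_dot x y ^+ 2 <= frob2 x * frob2 y.
Proof.
have [a0|apos] := eqVneq (frob2 x) 0.
  rewrite /frob_dot big1 ?expr0n ?a0 ?mul0r // => c _.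
  by rewrite (frob2_0 a0) mul0r.
have ha : 0 < frob2 x by rewrite lt_def apos frob2_ge0.
have := frob2_ge0 (frob2 x *: y - frob_dot x y *: x).
rewrite /frob2 !(dotBl, dotBr, dotZl, dotZr) (dotC y x) -/(frob2 x) -/(frob2 y).
move=> h; set a := frob2 x in h ha *; set d := frob_dot x y in h *.
have : 0 <= a * (a * frob2 y - d ^+ 2) by nra.
rewrite pmulr_rge0 // subr_ge0; nra.
Qed.

Lemma CS n (x y : 'rV[R]_n) : `|frob_dot x y| <= frob x * frob y.
Proof.
apply: le_sq_le; first by rewrite mulr_ge0 ?frob_ge0.
by rewrite real_normK ?num_real // exprMn !frob_sq CS2.
Qed.

Lemma frobD n (x y : 'rV[R]_n) : frob (x + y) <= frob x + frob y.
Proof.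
apply: le_sq_le; first by rewrite addr_ge0 ?frob_ge0.
rewrite frob_sq /frob2 !(dotDl, dotDr) (dotC y x) -/(frob2 x) -/(frob2 y) -!frob_sq.
have := CS x y; have := ler_norm (frob_dot x y); nra.
Qed.

Lemma frob2Z n a (x : 'rV[R]_n) : frob2 (a *: x) = a ^+ 2 * frob2 x.
Proof. by rewrite /frob2 dotZl dotZr mulrA expr2. Qed.

Lemma frobZ n a (x : 'rV[R]_n) : frob (a *: x) = `|a| * frob x.
Proof. by rewrite /frob frob2Z sqrtrM ?sqr_ge0 // sqrtr_sqr. Qed.

Lemma frobN n (x : 'rV[R]_n) : frob (- x) = frob x.
Proof. by rewrite -scaleN1r frobZ normrN normr1 mul1r. Qed.

Lemma frob0 n : frob (0 : 'rV[R]_n) = 0.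
Proof. by rewrite /frob /frob2 dot0r sqrtr0. Qed.

Lemma frobB n (x y : 'rV[R]_n) : frob (x - y) <= frob x + frob y.
Proof. by rewrite -(frobN y) frobD. Qed.

Lemma coord_le n (x : 'rV[R]_n) c : `|x 0 c| <= frob x.
Proof.
apply: le_sq_le; first exact: frob_ge0.
rewrite real_normK ?num_real // frob_sq /frob2 /frob_dot (bigD1 c) //= -expr2.
by rewrite lerDl sumr_ge0 // => i _; rewrite -expr2 sqr_ge0.
Qed.

Lemma frob_sum (I : Type) (r : seq I) (P : pred I) n (F : I -> 'rV[R]_n) :
  frob (\sum_(i <- r | P i) F i) <= \sum_(i <- r | P i) frob (F i).
Proof.
elim/big_rec2: _ => [|i y1 y2 _ h]; first by rewrite frob0.
by apply: le_trans (frobD _ _) _; rewrite lerD2l.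
Qed.

Lemma frob2_deriv n (x : R -> 'rV[R]_n) (dx : 'rV[R]_n) t0 :
  (forall c, is_derive t0 (1:R) (fun t => x t 0 c) (dx 0 c)) ->
  is_derive t0 (1:R) (fun t => frob2 (x t)) (2 * frob_dot (x t0) dx).
Proof.
move=> hd.
have -> : (fun t => frob2 (x t)) = \sum_(c < n) ((fun t => x t 0 c) * (fun t => x t 0 c)).
  by rewrite fct_sumE; apply/funext => t.
apply: is_derive_eq.
rewrite /frob_dot mulr_sumr; apply: eq_bigr => c _ /=.
rewrite /GRing.scale /=; ring.
Qed.

End Frob.
Section ML.
Variables (R : realType) (K : nat) (m : 'I_K -> nat) (N : nat).
Variable Phi : cores R m -> 'rV[R]_N.
Hypothesis hPhi : multilinear Phi.

Lemma cores_ext (G H : cores R m) : (forall k, G k = H k) -> G = H.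
Proof. by move=> h; apply: functional_extensionality_dep. Qed.

Lemma dfwith_id (G : cores R m) k : dfwith G k (G k) = G.
Proof. by apply: cores_ext => l; case: dfwithP. Qed.

Lemma dfwith_dfwith (G : cores R m) k x y :
  dfwith (dfwith G k x) k y = dfwith G k (y : 'rV_(m k)).
Proof. by apply: cores_ext => l; case: dfwithP => [|j hj]; rewrite ?dfwithin ?dfwithout. Qed.

Lemma mlD (G : cores R m) k (x y : 'rV_(m k)) :
  Phi (dfwith G k (x + y)) = Phi (dfwith G k x) + Phi (dfwith G k y).
Proof. by rewrite -{1}(scale1r x) hPhi scale1r. Qed.

Lemma ml0 (G : cores R m) k : Phi (dfwith G k (0 : 'rV_(m k))) = 0.
Proof.
have := @hPhi G k (-1) 0 0; rewrite scaleN1r oppr0 addr0 scaleN1r.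
by rewrite addNr.
Qed.

Lemma mlZ (G : cores R m) k a (x : 'rV_(m k)) :
  Phi (dfwith G k (a *: x)) = a *: Phi (dfwith G k x).
Proof. by rewrite -(addr0 (a *: x)) hPhi ml0 addr0. Qed.

Lemma mlsum (G : cores R m) k (I : Type) (r : seq I) (P : pred I) (F : I -> 'rV_(m k)) :
  Phi (dfwith G k (\sum_(i <- r | P i) F i)) = \sum_(i <- r | P i) Phi (dfwith G k (F i)).
Proof.
elim/big_rec2: _ => [|i y1 y2 _ <-]; first exact: ml0.
by rewrite mlD.
Qed.

Definition mix (X Y : cores R m) (n : nat) : cores R m :=
  fun l => if (l < n)%N then Y l else X l.

Lemma telescope (X Y : cores R m) :
  Phi Y - Phi X = \sum_(k < K) Phi (dfwith (mix X Y k) k (Y k - X k)).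
Proof.
have -> : Phi Y - Phi X = Phi (mix X Y K) - Phi (mix X Y 0).
  congr (Phi _ - Phi _); apply: cores_ext => l; rewrite /mix ?ltn_ord //.
rewrite -(telescope_sumr (fun n => Phi (mix X Y n)) (leq0n K)) big_mkord; apply: eq_bigr => k _.
have e1 : mix X Y k.+1 = dfwith (mix X Y k) k (Y k - X k + X k).
  apply: cores_ext => l; rewrite subrK; case: dfwithP => [|j hj].
    by rewrite /mix ltnSn.
  by rewrite /mix ltnS leq_eqVlt; case: eqP => // /val_inj e; rewrite e eqxx in hj.
have e2 : mix X Y k = dfwith (mix X Y k) k (X k).
  by apply: cores_ext => l; case: dfwithP => // ; rewrite /mix ltnn.
by rewrite e1 mlD -e2 addrK.
Qed.

End ML.
Section Bound.
Variables (R : realType) (K : nat) (m : 'I_K -> nat) (N : nat).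
Variable Phi : cores R m -> 'rV[R]_N.
Hypothesis hPhi : multilinear Phi.

Lemma ml_claim n : exists M : R, 0 <= M /\ forall H : cores R m,
  (forall k : 'I_K, (n <= k)%N -> exists c, H k = delta_mx 0 c) ->
  frob (Phi H) <= M * \prod_(k < K | (k < n)%N) frob (H k).
Proof.
elim: n => [|n [M [M0 IH]]].
  exists (\sum_(c : {dffun forall k : 'I_K, 'I_(m k)})
            frob (Phi (fun k => delta_mx 0 (c k)))).
  split; first by apply: sumr_ge0 => c _; exact: frob_ge0.
  move=> H hH; have [c hc] := fin_all_exists (fun k => hH k (leq0n k)).
  rewrite [X in _ * X]big_pred0 // mulr1.
  pose cf : {dffun forall k : 'I_K, 'I_(m k)} := finfun c.
  rewrite (bigD1 cf) //=.
  have -> : H = (fun k => 'e_(cf k) : 'rV_(m k)).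
    by apply: cores_ext => k; rewrite ffunE hc.
  by rewrite lerDl sumr_ge0 // => i _; exact: frob_ge0.
case: (ltnP n K) => hn; last first.
  exists M; split => // H hH.
  have -> : \prod_(k < K | (k < n.+1)%N) frob (H k) = \prod_(k < K | (k < n)%N) frob (H k).
    by apply: eq_bigl => k; rewrite (leq_trans (ltn_ord k) hn) (leq_trans (ltn_ord k) (leqW hn)).
  by apply: IH => k hk; have := leq_trans (ltn_ord k) hn; rewrite ltnNge hk.
pose k0 : 'I_K := Ordinal hn.
exists ((m k0)%:R * M); split; first by rewrite mulr_ge0.
move=> H hH.
have hP c : frob (Phi (dfwith H k0 ('e_c : 'rV_(m k0))))
    <= M * \prod_(k < K | (k < n)%N) frob (H k).
  have -> : \prod_(k < K | (k < n)%N) frob (H k)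
      = \prod_(k < K | (k < n)%N) frob (dfwith H k0 ('e_c : 'rV_(m k0)) k).
    apply: eq_bigr => k hk; rewrite dfwithout //.
    by apply/eqP => /(congr1 val) /= e; rewrite e ltnn in hk.
  apply: IH => k hk; case: (eqVneq k0 k) => [<-|hj].
    by rewrite dfwithin; exists c.
  rewrite dfwithout //; apply: hH; rewrite ltn_neqAle hk andbT; apply/eqP => e.
  by move: hj; rewrite -(inj_eq val_inj) /= e eqxx.
have -> : Phi H = Phi (dfwith H k0 (\sum_(c < m k0) H k0 0 c *: ('e_c : 'rV_(m k0)))).
  by rewrite -row_sum_delta dfwith_id.
rewrite (mlsum hPhi).
apply: le_trans (frob_sum _ _ _) _.
apply: (@le_trans _ _ (\sum_(c < m k0) (frob (H k0) * (M * \prod_(k < K | (k < n)%N) frob (H k))))).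
  apply: ler_sum => c _; rewrite (mlZ hPhi) frobZ.
  by apply: ler_pM; [exact: normr_ge0 | exact: frob_ge0 | exact: coord_le | exact: hP].
rewrite sumr_const card_ord -mulr_natl [X in _ <= _ * X](bigD1 k0) /=; last exact: ltnSn.
have -> : \prod_(i < K | (i < n.+1)%N && (i != k0)) frob (H i)
    = \prod_(k < K | (k < n)%N) frob (H k).
  apply: eq_bigl => k; rewrite ltnS leq_eqVlt -(inj_eq val_inj) /=.
  by case: ltngtP.
by rewrite le_eqVlt; apply/orP; left; apply/eqP; ring.
Qed.

Lemma ml_bound : exists M : R, 0 <= M /\ forall H : cores R m,
  frob (Phi H) <= M * \prod_(k < K) frob (H k).
Proof.
have [M [M0 hM]] := ml_claim K; exists M; split => // H.
have hb : frob (Phi H) <= M * \prod_(k < K | (k < K)%N) frob (H k).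
  by apply: hM => k hk; have := leq_ltn_trans hk (ltn_ord k); rewrite ltnn.
by move: hb; rewrite (eq_bigl xpredT) // => k; rewrite ltn_ord.
Qed.
End Bound.
Lemma prod_ifeq (R : realType) (K : nat) (k : 'I_K) (r : R) :
  \prod_(l < K) (if l == k then r else 1) = r.
Proof. by rewrite (bigD1 k) //= eqxx big1 ?mulr1 // => l /negbTE ->. Qed.

Section Main.
Variables (R : realType) (K : nat) (m : 'I_K -> nat) (N : nat).
Variable Phi : cores R m -> 'rV[R]_N.
Hypothesis hPhi : multilinear Phi.
Variable M : R.
Hypothesis M0 : 0 <= M.
Hypothesis hM : forall H : cores R m, frob (Phi H) <= M * \prod_(k < K) frob (H k).
Variables (f : 'rV[R]_N -> R) (gf : 'rV[R]_N -> 'rV[R]_N) (L : R).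
Variables (gF : forall k : 'I_K, cores R m -> 'rV[R]_(m k)) (G : cores R m).
Hypothesis hgrad : is_gradient f gf.
Hypothesis hLip : forall X Y : 'rV[R]_N, frob (gf X - gf Y) <= L * frob (X - Y).
Hypothesis hpg : is_partial_gradient (fun H : cores R m => f (Phi H)) gF.
Variable rho : R.
Hypothesis rho0 : 0 < rho.
Hypothesis rho1 : rho <= 1.

Lemma KI (H : cores R m) (k : 'I_K) (w : 'rV[R]_(m k)) :
  frob_dot (gF k H) w = frob_dot (gf (Phi H)) (Phi (dfwith H k w)).
Proof.
have h1 := @hpg H k w.
have h2 := hgrad (Phi H) (Phi (dfwith H k w)).
have e : (fun t : R => f (Phi (dfwith H k (H k + t *: w))))
       = (fun t : R => f (Phi H + t *: Phi (dfwith H k w))).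
  by apply/funext => t; rewrite addrC hPhi dfwith_id addrC.
rewrite e in h1.
by rewrite -(@derive_val _ _ _ _ _ _ _ h1) -(@derive_val _ _ _ _ _ _ _ h2).
Qed.

Let u := sam_u gF G.
Let s := rho * u.
Let h (k : 'I_K) : 'rV[R]_(m k) := s *: gF k G.
Let tG := sam_perturb gF rho G.
Let B := \prod_(k < K) (frob (G k) + 1).

Lemma tGE k : tG k = G k + h k.
Proof. by []. Qed.

Lemma hh k : frob (h k) <= rho.
Proof.
apply: le_sq_le; first exact: ltW.
rewrite frob_sq /h frob2Z.
set S := \sum_(j < K) frob2 (gF j G).
have S0 : 0 <= S by apply: sumr_ge0 => j _; exact: frob2_ge0.
have gS : frob2 (gF k G) <= S.
  by rewrite /S (bigD1 k) //= lerDl sumr_ge0 // => j _; exact: frob2_ge0.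
have uS : u ^+ 2 * S <= 1.
  rewrite /u /sam_u -/S exprVn sqr_sqrtr //.
  have [->|S0'] := eqVneq S 0; first by rewrite mulr0.
  by rewrite mulVf.
rewrite /s exprMn -mulrA.
have : u ^+ 2 * frob2 (gF k G) <= 1.
  apply: le_trans uS; apply: ler_wpM2l => //; exact: sqr_ge0.
have := sqr_ge0 rho; have := sqr_ge0 u; have := frob2_ge0 (gF k G); nra.
Qed.

Lemma B0 : 0 <= B.
Proof. by apply: prodr_ge0 => k _; rewrite addr_ge0 ?frob_ge0. Qed.

Lemma slotG p : frob (G p) <= frob (G p) + 1.
Proof. by rewrite lerDl. Qed.

Lemma slottG p : frob (tG p) <= frob (G p) + 1.
Proof. by rewrite tGE; apply: le_trans (frobD _ _) _; rewrite lerD2l (le_trans (hh p)). Qed.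

Lemma sloth p : frob (h p) <= (frob (G p) + 1) * rho.
Proof.
apply: le_trans (hh p) _; rewrite ler_peMl ?(ltW rho0) //.
by rewrite lerDr frob_ge0.
Qed.

Lemma boundZ (Z : cores R m) (b : 'I_K -> R) :
  (forall p, frob (Z p) <= b p) -> frob (Phi Z) <= M * \prod_(p < K) b p.
Proof.
move=> hb; apply: le_trans (hM Z) _; apply: ler_wpM2l => //.
by apply: ler_prod => p _; rewrite frob_ge0 hb.
Qed.

Lemma hdiff k : tG k - G k = h k.
Proof. by rewrite tGE addrC addKr. Qed.

Lemma prodB1 (k : 'I_K) :
  \prod_(p < K) ((frob (G p) + 1) * (if p == k then rho else 1)) = B * rho.
Proof. by rewrite big_split /= prod_ifeq. Qed.

Lemma prodB2 (k l : 'I_K) :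
  \prod_(p < K) ((frob (G p) + 1) * (if p == l then rho else 1) * (if p == k then rho else 1))
    = B * rho ^+ 2.
Proof. by rewrite big_split big_split /= !prod_ifeq -mulrA expr2. Qed.

Lemma bnd_T : frob (Phi tG - Phi G) <= K%:R * (M * (B * rho)).
Proof.
rewrite (telescope hPhi); apply: le_trans (frob_sum _ _ _) _.
have -> : K%:R * (M * (B * rho)) = \sum_(k < K) (M * (B * rho)).
  by rewrite sumr_const card_ord mulr_natl.
apply: ler_sum => k _; rewrite hdiff -(prodB1 k); apply: boundZ => p.
case: (eqVneq k p) => [<-|hp]; first by rewrite dfwithin; exact: sloth.
rewrite dfwithout // ?mulr1 /mix; case: ifP => _.
  exact: slottG.
exact: slotG.
Qed.

Lemma bnd_Y k : frob (Phi (dfwith tG k (h k))) <= M * (B * rho).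
Proof.
rewrite -(prodB1 k); apply: boundZ => p.
case: (eqVneq k p) => [<-|hp]; first by rewrite dfwithin; exact: sloth.
by rewrite dfwithout // ?mulr1; exact: slottG.
Qed.

Lemma bnd_YX k : frob (Phi (dfwith tG k (h k)) - Phi (dfwith G k (h k)))
  <= K%:R * (M * (B * rho ^+ 2)).
Proof.
rewrite (telescope hPhi); apply: le_trans (frob_sum _ _ _) _.
have -> : K%:R * (M * (B * rho ^+ 2)) = \sum_(k < K) (M * (B * rho ^+ 2)).
  by rewrite sumr_const card_ord mulr_natl.
apply: ler_sum => l _.
case: (eqVneq k l) => [<-|hkl].
  rewrite !dfwithin subrr (ml0 hPhi) frob0.
  by rewrite mulr_ge0 // mulr_ge0 ?B0 // sqr_ge0.
rewrite !dfwithout // hdiff -(prodB2 k l); apply: boundZ => p.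
case: (eqVneq l p) => [<-|hp].
  by rewrite dfwithin (eq_sym l k) (negbTE hkl) mulr1; exact: sloth.
rewrite dfwithout // ?mulr1 /mix.
case: (eqVneq k p) => [<-|hkp].
  by rewrite ?(negbTE hp) ?mulr1 ?mul1r; case: ifP => _; rewrite dfwithin; exact: sloth.
rewrite ?mulr1.
by case: ifP => _; rewrite dfwithout //; [exact: slottG | exact: slotG].
Qed.

Definition Pk k := frob_dot (gf (Phi tG)) (Phi (dfwith tG k (h k)))
  - frob_dot (gf (Phi G)) (Phi (dfwith G k (h k))).

Lemma P_bound k : `|Pk k| <= rho ^+ 2 * (`|L| * K%:R * M ^+ 2 * B ^+ 2
   + frob (gf (Phi G)) * K%:R * M * B).
Proof.
set Y := Phi (dfwith tG k (h k)); set X := Phi (dfwith G k (h k)).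
have e : Pk k = frob_dot (gf (Phi tG) - gf (Phi G)) Y + frob_dot (gf (Phi G)) (Y - X).
  by rewrite /Pk dotBl dotBr addrA subrK.
rewrite e; apply: le_trans (ler_normD _ _) _.
have c1 : frob (gf (Phi tG) - gf (Phi G)) <= `|L| * (K%:R * (M * (B * rho))).
  apply: le_trans (hLip _ _) _; apply: (@le_trans _ _ (`|L| * frob (Phi tG - Phi G))).
    by rewrite ler_wpM2r ?frob_ge0 // ler_norm.
  by apply: ler_wpM2l => //; exact: bnd_T.
have t1 : `|frob_dot (gf (Phi tG) - gf (Phi G)) Y|
    <= (`|L| * (K%:R * (M * (B * rho)))) * (M * (B * rho)).
  apply: le_trans (CS _ _) _; apply: ler_pM; rewrite ?frob_ge0 //.
  exact: bnd_Y.
have t2 : `|frob_dot (gf (Phi G)) (Y - X)|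
    <= frob (gf (Phi G)) * (K%:R * (M * (B * rho ^+ 2))).
  apply: le_trans (CS _ _) _; apply: ler_wpM2l; rewrite ?frob_ge0 //.
  exact: bnd_YX.
apply: le_trans (lerD t1 t2) _.
suff -> : `|L| * (K%:R * (M * (B * rho))) * (M * (B * rho)) +
   frob (gf (Phi G)) * (K%:R * (M * (B * rho ^+ 2)))
   = rho ^+ 2 * (`|L| * K%:R * M ^+ 2 * B ^+ 2 + frob (gf (Phi G)) * K%:R * M * B) by [].
ring.
Qed.

Lemma P_ident k :
  2 * frob_dot (G k) (sam_field gF rho G k) - 2 * (rho * sam_u gF G * frob2 (gF k G))
  = 2 * Pk k - 2 * frob_dot (gf (Phi tG)) (Phi tG).
Proof.
rewrite /sam_field dotNr (dotC (G k)).
have e1 : G k = tG k - h k by rewrite tGE addrK.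
have e2 : frob_dot (gF k tG) (G k)
    = frob_dot (gf (Phi tG)) (Phi tG) - frob_dot (gf (Phi tG)) (Phi (dfwith tG k (h k))).
  by rewrite e1 dotBr (KI tG (tG k)) dfwith_id (KI tG (h k)).
have e3 : rho * sam_u gF G * frob2 (gF k G) = frob_dot (gf (Phi G)) (Phi (dfwith G k (h k))).
  by rewrite -(KI G (h k)) /h dotZr.
rewrite -/tG e2 e3 /Pk; ring.
Qed.

End Main.
Theorem theorem2 (R : realType) (K : nat) (m : 'I_K -> nat) (N : nat)
    (Phi : cores R m -> 'rV[R]_N) :
  (2 <= K)%N ->
  multilinear Phi ->
  exists Cst : R -> ('I_K -> R) -> R -> R,
  forall (f : 'rV[R]_N -> R) (gf : 'rV[R]_N -> 'rV[R]_N) (L : R)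
         (gF : forall k : 'I_K, cores R m -> 'rV[R]_(m k)) (G : cores R m),
    is_gradient f gf ->
    (forall X Y : 'rV[R]_N, frob (gf X - gf Y) <= L * frob (X - Y)) ->
    is_partial_gradient (fun H : cores R m => f (Phi H)) gF ->
    (exists k : 'I_K, gF k G != 0) ->
    forall (i j : 'I_K), i != j ->
    forall rho : R, 0 < rho -> rho <= 1 ->
    forall (gamma : R -> cores R m) (t0 : R),
      follows_at gamma t0 (sam_field gF rho G) G ->
      exists Rij : R,
        is_derive t0 (1 : R)
          (fun t : R => frob2 (gamma t i) - frob2 (gamma t j))
          (2 * rho * sam_u gF G * (frob2 (gF i G) - frob2 (gF j G)) + Rij)
        /\ `|Rij| <= Cst L (fun k => frob (G k)) (frob (gf (Phi G))) * rho ^+ 2.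
Proof.
move=> hK hPhi.
have [M [M0 hM]] := ml_bound hPhi.
exists (fun L n a => 4 * (`|L| * K%:R * M ^+ 2 * (\prod_(k < K) (n k + 1)) ^+ 2
                          + a * K%:R * M * \prod_(k < K) (n k + 1))).
move=> f gf L gF G hgrad hLip hpg _ i j hij rho rho0 rho1 gamma t0 [hg0 hder].
set V := sam_field gF rho G.
have di := @frob2_deriv R _ (fun t => gamma t i) (V i) t0 (fun c => hder i c).
have dj := @frob2_deriv R _ (fun t => gamma t j) (V j) t0 (fun c => hder j c).
have dB := is_deriveB di dj.
set D := 2 * frob_dot (gamma t0 i) (V i) - 2 * frob_dot (gamma t0 j) (V j).
exists (D - 2 * rho * sam_u gF G * (frob2 (gF i G) - frob2 (gF j G))).
split.
  have -> : (fun t => frob2 (gamma t i) - frob2 (gamma t j))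
     = (fun t => frob2 (gamma t i)) - (fun t => frob2 (gamma t j)) by [].
  by apply: is_derive_eq dB _; rewrite [RHS]addrC subrK.
have ei := P_ident hPhi G hgrad hpg rho i.
have ej := P_ident hPhi G hgrad hpg rho j.
have bi := P_bound hPhi M0 hM gF G hLip rho0 rho1 i.
have bj := P_bound hPhi M0 hM gF G hLip rho0 rho1 j.
set Pi := Pk Phi gf gF G rho i in ei bi; set Pj := Pk Phi gf gF G rho j in ej bj.
have e : D - 2 * rho * sam_u gF G * (frob2 (gF i G) - frob2 (gF j G)) = 2 * Pi - 2 * Pj.
  rewrite /D hg0; lra.
rewrite e; apply: le_trans (ler_normB _ _) _.
rewrite !normrM ger0_norm //.
set C0 := (X in rho ^+ 2 * X) in bi bj *.
have -> : 4 * C0 * rho ^+ 2 = 4 * (rho ^+ 2 * C0) by ring.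
lra.
Qed.
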